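(* Let $\Lambda$ be a row-finite, locally-convex $k$-graph, $R$ a commutative ring with $1$, $H\subseteq\Lambda^0$ a hereditary and saturated set, and $J$ the ideal of $KP_R(\Lambda)$ generated by $\{p_v: v\in H\}$. Then \[H(J^\perp)=\{v\in\Lambda^0: v\Lambda H=\emptyset\}=\Lambda^0\setminus\overline{H}(J),\] i.e. $H(J^\perp)$ consists exactly of the vertices $v$ for which there is no path $\lambda$ with $r(\lambda)=v$ and $s(\lambda)\in H$.
   Context: A $k$-graph $(\Lambda,d)$ is a countable category with a functor $d:\Lambda\to\mathbb{N}^k$ with unique factorization; vertices $\Lambda^0$ are the degree-$0$ paths, $r,s$ range and source, $e_i$ standard generators, $v\Lambda H=\{\lambda: r(\lambda)=v, s(\lambda)\in H\}$. Row-finite: finitely many paths of each degree with each range. $\Lambda^{\le n}=\{\lambda:d(\lambda)\le n,\ d(\lambda)_i<n_i\Rightarrow s(\lambda)\Lambda^{e_i}=\emptyset\}$. Locally-convex: for $i\neq j$, $\lambda\in v\Lambda^{e_i},\mu\in v\Lambda^{e_j}$, $s(\lambda)\Lambda^{e_j}\ne\emptyset\ne s(\mu)\Lambda^{e_i}$. $H$ hereditary: $r(\lambda)\in H\Rightarrow s(\lambda)\in H$; saturated: $s(v\Lambda^{\le e_i})\subseteq H$ for some $i$ implies $v\in H$. $KP_R(\Lambda)$ is the universal $R$-algebra generated by $p_v$, $s_\lambda,s_{\lambda^*}$ with relations (KP1) $p_v$ mutually orthogonal idempotents; (KP2) $s_\lambda s_\mu=s_{\lambda\mu}$, $s_{\mu^*}s_{\lambda^*}=s_{(\lambda\mu)^*}$,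 $p_{r(\lambda)}s_\lambda=s_\lambda=s_\lambda p_{s(\lambda)}$, $p_{s(\lambda)}s_{\lambda^*}=s_{\lambda^*}=s_{\lambda^*}p_{r(\lambda)}$; (KP3) $s_{\lambda^*}s_\mu=\delta_{\lambda,\mu}p_{s(\lambda)}$ for $\lambda,\mu\in\Lambda^{\le n}$, $n\ne0$; (KP4) $p_v=\sum_{\lambda\in v\Lambda^{\le n}}s_\lambda s_{\lambda^*}$, $n\ne0$. For an ideal $I$: $H(I)=\{v:p_v\in I\}$, $\overline{H}(I)=\{r(\lambda):\lambda\in\Lambda,\ s(\lambda)\in H(I)\}$, and $I^\perp=\{a: ax=xa=0\ \forall x\in I\}$. *)

(* Defs.v *)
From HB Require Import structures.
From mathcomp Require Import all_boot all_order all_algebra.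
Set Implicit Arguments. Unset Strict Implicit. Unset Printing Implicit Defensive.
Import GRing.Theory.
Local Open Scope ring_scope.

(* A k-graph: a countable category (objects = vertices, morphisms = paths)
   with a degree functor d : Lambda -> N^k satisfying unique factorisation.
   Composition [kcomp l m] (= l m) is only meaningful when [src l = rng m]. *)
Record kgraph (k : nat) := KGraph {
  vert : countType;
  kpath : countType;
  rng : kpath -> vert;
  src : kpath -> vert;
  idp : vert -> kpath;
  kcomp : kpath -> kpath -> kpath;
  deg : kpath -> 'I_k -> nat;
  rng_idp : forall v, rng (idp v) = v;
  src_idp : forall v, src (idp v) = v;
  rng_comp : forall l m, src l = rng m -> rng (kcomp l m) = rng l;
  src_comp : forall l m, src l = rng m -> src (kcomp l m) = src m;
  comp_idl : forall l, kcomp (idp (rng l)) l = l;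
  comp_idr : forall l, kcomp l (idp (src l)) = l;
  compA : forall l m n, src l = rng m -> src m = rng n ->
     kcomp l (kcomp m n) = kcomp (kcomp l m) n;
  deg_idp : forall v i, deg (idp v) i = 0%N;
  deg_comp : forall l m, src l = rng m ->
     forall i, deg (kcomp l m) i = (deg l i + deg m i)%N;
  factorisation : forall l (m n : 'I_k -> nat),
     (forall i, deg l i = (m i + n i)%N) ->
     exists mu nu, [/\ src mu = rng nu, kcomp mu nu = l,
                       forall i, deg mu i = m i & forall i, deg nu i = n i];
  factorisation_uniq : forall mu nu mu' nu',
     src mu = rng nu -> src mu' = rng nu' -> kcomp mu nu = kcomp mu' nu' ->
     (forall i, deg mu i = deg mu' i) -> mu = mu' /\ nu = nu'
}.

Section KGraphDefs.
Variables (k : nat) (L : kgraph k).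

Definition e_ (i : 'I_k) : 'I_k -> nat := fun j => nat_of_bool (j == i).

Definition has_path_deg (v : vert L) (n : 'I_k -> nat) : Prop :=
  exists l : kpath L, rng l = v /\ forall j, deg l j = n j.

Definition in_le (n : 'I_k -> nat) (l : kpath L) : Prop :=
  (forall i, deg l i <= n i)%N /\
  (forall i, (deg l i < n i)%N -> ~ has_path_deg (src l) (e_ i)).

Definition row_finite : Prop :=
  forall (v : vert L) (n : 'I_k -> nat), exists s : seq (kpath L),
    forall l, rng l = v -> (forall j, deg l j = n j) -> l \in s.

Definition locally_convex : Prop :=
  forall (i j : 'I_k) (l m : kpath L), i != j -> rng l = rng m ->
    (forall t, deg l t = e_ i t) -> (forall t, deg m t = e_ j t) ->
    has_path_deg (src l) (e_ j) /\ has_path_deg (src m) (e_ i).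

Definition hereditary (H : vert L -> Prop) : Prop :=
  forall l : kpath L, H (rng l) -> H (src l).

Definition saturated (H : vert L -> Prop) : Prop :=
  forall v : vert L,
    (exists i : 'I_k, forall l, rng l = v -> in_le (e_ i) l -> H (src l)) -> H v.

Definition nonzero_deg (n : 'I_k -> nat) : Prop := exists i, n i <> 0%N.

End KGraphDefs.

Record nualg (R : comNzRingType) := NUAlg {
  nua_car :> lmodType R;
  nua_mul : nua_car -> nua_car -> nua_car;
  nua_mulA : forall a b c, nua_mul a (nua_mul b c) = nua_mul (nua_mul a b) c;
  nua_mulDl : forall a b c, nua_mul (a + b) c = nua_mul a c + nua_mul b c;
  nua_mulDr : forall a b c, nua_mul a (b + c) = nua_mul a b + nua_mul a c;
  nua_scalerAl : forall (r : R) a b, nua_mul (r *: a) b = r *: nua_mul a b;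
  nua_scalerAr : forall (r : R) a b, nua_mul a (r *: b) = r *: nua_mul a b
}.

Definition nua_hom (R : comNzRingType) (A B : nualg R) (f : A -> B) : Prop :=
  [/\ forall a b, f (a + b) = f a + f b,
      forall (r : R) a, f (r *: a) = r *: f a &
      forall a b, f (nua_mul a b) = nua_mul (f a) (f b)].

Record kpdata (k : nat) (L : kgraph k) (R : comNzRingType) (A : nualg R) := KPData {
  kp_p : vert L -> A;
  kp_s : kpath L -> A;
  kp_ss : kpath L -> A
}.

Section KP.
Variables (k : nat) (L : kgraph k) (R : comNzRingType).

Definition is_KP_family (A : nualg R) (F : kpdata L A) : Prop :=
  let p := kp_p F in let s := kp_s F in let ss := kp_ss F in
  let mul := @nua_mul R A in
  (forall v, mul (p v) (p v) = p v) /\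
  (forall v w, v != w -> mul (p v) (p w) = 0) /\
  (forall l m, src l = rng m ->
     mul (s l) (s m) = s (kcomp l m) /\ mul (ss m) (ss l) = ss (kcomp l m)) /\
  (forall l, mul (p (rng l)) (s l) = s l /\ mul (s l) (p (src l)) = s l /\
             mul (p (src l)) (ss l) = ss l /\ mul (ss l) (p (rng l)) = ss l) /\
  (forall (n : 'I_k -> nat) l m, nonzero_deg n -> in_le n l -> in_le n m ->
     mul (ss l) (s m) = if l == m then p (src l) else 0) /\
  (forall (v : vert L) (n : 'I_k -> nat) (es : seq (kpath L)), nonzero_deg n ->
     uniq es -> (forall l, l \in es <-> (rng l = v /\ in_le n l)) ->
     p v = \sum_(l <- es) mul (s l) (ss l)).

Definition is_KP_algebra (A : nualg R) (F : kpdata L A) : Prop :=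
  is_KP_family F /\
  forall (B : nualg R) (G : kpdata L B), is_KP_family G ->
    (exists f : A -> B, nua_hom f /\
        (forall v, f (kp_p F v) = kp_p G v) /\
        (forall l, f (kp_s F l) = kp_s G l) /\
        (forall l, f (kp_ss F l) = kp_ss G l)) /\
    (forall f g : A -> B, nua_hom f -> nua_hom g ->
        (forall v, f (kp_p F v) = g (kp_p F v)) ->
        (forall l, f (kp_s F l) = g (kp_s F l)) ->
        (forall l, f (kp_ss F l) = g (kp_ss F l)) ->
        forall a, f a = g a).

End KP.

Section Ideals.
Variables (R : comNzRingType) (A : nualg R).

Definition is_ideal (I : A -> Prop) : Prop :=
  [/\ I 0, forall a b, I a -> I b -> I (a + b),
      forall (r : R) a, I a -> I (r *: a) &
      forall a x, I x -> I (nua_mul a x) /\ I (nua_mul x a)].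

Definition gen_ideal (S : A -> Prop) : A -> Prop :=
  fun x => forall I, is_ideal I -> (forall y, S y -> I y) -> I x.

Definition perp (I : A -> Prop) : A -> Prop :=
  fun a => forall x, I x -> nua_mul a x = 0 /\ nua_mul x a = 0.

End Ideals.

Section HI.
Variables (k : nat) (L : kgraph k) (R : comNzRingType) (A : nualg R) (F : kpdata L A).

Definition HofI (I : A -> Prop) : vert L -> Prop := fun v => I (kp_p F v).

Definition HbarofI (I : A -> Prop) : vert L -> Prop :=
  fun v => exists l : kpath L, rng l = v /\ HofI I (src l).

Definition ideal_of_vertices (H : vert L -> Prop) : A -> Prop :=
  gen_ideal (fun x => exists v, H v /\ x = kp_p F v).

End HI.

(* Main.v *)
Require Import Defs.
From HB Require Import structures.
From mathcomp Require Import all_boot all_order all_algebra.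
From mathcomp Require Import boolp functions zify.
Set Implicit Arguments. Unset Strict Implicit. Unset Printing Implicit Defensive.
Import GRing.Theory.
Local Open Scope ring_scope.
Record lpred (R : comNzRingType) (V : lmodType R) := LPred {
  lp :> V -> Prop;
  lp0 : lp 0;
  lpD : forall a b, lp a -> lp b -> lp (a + b);
  lpZ : forall (r : R) a, lp a -> lp (r *: a) }.

Section SubL.
Variables (R : comNzRingType) (V : lmodType R) (S : lpred V).
Definition lpb : {pred V} := fun x => `[< S x >].
Record subl := SubL { subl_val : V; subl_prop : lpb subl_val }.
HB.instance Definition _ := [isSub for subl_val].
HB.instance Definition _ := [Choice of subl by <:].
Lemma lpb_closed : subsemimod_closed lpb.
Proof.
split; [split|].
- by apply/asboolP; apply: lp0.
- by move=> a b /asboolP Ha /asboolP Hb; apply/asboolP; apply: lpD.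
- by move=> r a /asboolP Ha; apply/asboolP; apply: lpZ.
Qed.
HB.instance Definition _ := GRing.SubChoice_isSubLmodule.Build R V lpb subl lpb_closed.
Lemma subl_valD (a b : subl) : subl_val (a + b) = subl_val a + subl_val b.
Proof. by []. Qed.
Lemma subl_valZ r (a : subl) : subl_val (r *: a) = r *: subl_val a.
Proof. by []. Qed.
Lemma subl_val0 : subl_val (0 : subl) = 0.
Proof. by []. Qed.
End SubL.

Section SubAlg.
Variables (R : comNzRingType) (A : nualg R) (S : lpred A).
Hypothesis SM : forall a b, S a -> S b -> S (nua_mul a b).
Local Notation C := (subl S).
Definition subl_mk (a : A) (h : S a) : C := @SubL R A S a (asboolT h).
Lemma subl_S (x : C) : S (subl_val x).
Proof. by case: x => a Ha; apply/asboolP. Qed.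
Definition smul (x y : C) : C := subl_mk (SM (subl_S x) (subl_S y)).
Lemma smul_val x y : subl_val (smul x y) = nua_mul (subl_val x) (subl_val y).
Proof. by []. Qed.
Lemma subl_inj (x y : C) : subl_val x = subl_val y -> x = y.
Proof. exact: val_inj. Qed.
Lemma smulA : forall a b c, smul a (smul b c) = smul (smul a b) c.
Proof. by move=> a b c; apply: subl_inj; rewrite !smul_val nua_mulA. Qed.
Lemma smulDl : forall a b c, smul (a + b) c = smul a c + smul b c.
Proof. by move=> a b c; apply: subl_inj; rewrite !(smul_val, subl_valD) nua_mulDl. Qed.
Lemma smulDr : forall a b c, smul a (b + c) = smul a b + smul a c.
Proof. by move=> a b c; apply: subl_inj; rewrite !(smul_val, subl_valD) nua_mulDr. Qed.
Lemma smulZl : forall (r : R) a b, smul (r *: a) b = r *: smul a b.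
Proof. by move=> r a b; apply: subl_inj; rewrite !(smul_val, subl_valZ) nua_scalerAl. Qed.
Lemma smulZr : forall (r : R) a b, smul a (r *: b) = r *: smul a b.
Proof. by move=> r a b; apply: subl_inj; rewrite !(smul_val, subl_valZ) nua_scalerAr. Qed.
Definition subnualg : nualg R := NUAlg smulA smulDl smulDr smulZl smulZr.
End SubAlg.

Lemma subl_val_sum (R : comNzRingType) (V : lmodType R) (S : lpred V) (I : Type)
  (r : seq I) (f : I -> subl S) :
  subl_val (\sum_(i <- r) f i) = \sum_(i <- r) subl_val (f i).
Proof.
elim: r => [|x r IH]; first by rewrite !big_nil.
by rewrite !big_cons subl_valD IH.
Qed.

Section Ind.
Variables (k : nat) (L : kgraph k) (R : comNzRingType) (A : nualg R) (F : kpdata L A).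
Hypothesis HKP : is_KP_algebra F.

Lemma KP_ind (P : A -> Prop) :
  P 0 -> (forall a b, P a -> P b -> P (a + b)) -> (forall (r : R) a, P a -> P (r *: a)) ->
  (forall a b, P a -> P b -> P (nua_mul a b)) ->
  (forall v, P (kp_p F v)) -> (forall l, P (kp_s F l)) -> (forall l, P (kp_ss F l)) ->
  forall a, P a.
Proof.
move=> P0 PD PZ PM Pp Ps Pss.
pose S := LPred P0 PD PZ.
pose C := subnualg (S:=S) PM.
pose G : kpdata L C := @KPData k L R C (fun v => subl_mk (S:=S) (Pp v))
   (fun l => subl_mk (S:=S) (Ps l)) (fun l => subl_mk (S:=S) (Pss l)).
have [HF Huniv] := HKP.
have HG : is_KP_family G.
  case: HF => [K1 [K1' [K2 [K2' [K3 K4]]]]].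
  split; [|split; [|split; [|split; [|split]]]].
  - by move=> v; apply: subl_inj; rewrite smul_val /= K1.
  - by move=> v w vw; apply: subl_inj; rewrite smul_val /= K1'.
  - move=> l m lm; have [e1 e2] := K2 l m lm.
    by split; apply: subl_inj; rewrite smul_val /= ?e1 ?e2.
  - move=> l; have [e1 [e2 [e3 e4]]] := K2' l.
    by split; [|split; [|split]]; apply: subl_inj; rewrite smul_val /= ?e1 ?e2 ?e3 ?e4.
  - move=> n l m nz hl hm; apply: subl_inj; rewrite smul_val /= (K3 n l m nz hl hm).
    by case: (l == m).
  - move=> v n es nz ues hes; apply: subl_inj; rewrite subl_val_sum /= (K4 v n es nz ues hes).
    by apply: eq_bigr.
have [[h [hh [hp [hs hss]]]] _] := Huniv C G HG.
have Hid : nua_hom (fun a : A => a) by [].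
have Hg : nua_hom (fun a : A => subl_val (h a)).
  case: hh => h1 h2 h3; split.
  - by move=> a b; rewrite h1.
  - by move=> r a; rewrite h2.
  - by move=> a b; rewrite h3.
have [_ U] := Huniv A F HF.
move=> a.
have -> : a = subl_val (h a).
  apply: (U _ _ Hid Hg) => [v|l|l]; by rewrite ?hp ?hs ?hss.
exact: (@subl_S R A S (h a)).
Qed.
End Ind.

Definition kcompA := @Defs.compA.

Section Graph.
Variables (k : nat) (L : kgraph k).
Implicit Types (l m a b c : kpath L) (v w : vert L) (n p q : 'I_k -> nat).

Definition prefix a b := exists c, src a = rng c /\ kcomp a c = b.
Definition dle p q := forall i, (p i <= q i)%N.

Lemma deg0_id l : (forall i, deg l i = 0%N) -> l = idp (rng l).
Proof.
move=> h.
have [] := @factorisation_uniq _ L l (idp (src l)) (idp (rng l)) l.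
- by rewrite rng_idp.
- by rewrite src_idp.
- by rewrite comp_idl comp_idr.
- by move=> i; rewrite h deg_idp.
by [].
Qed.

Lemma deg0_rs l : (forall i, deg l i = 0%N) -> src l = rng l.
Proof. by move=> h; rewrite (deg0_id h) src_idp rng_idp. Qed.

Lemma cancel_l a b b' : src a = rng b -> src a = rng b' -> kcomp a b = kcomp a b' -> b = b'.
Proof. by move=> h1 h2 e; have [] := factorisation_uniq h1 h2 e (fun i => erefl). Qed.

Lemma prefix_refl a : prefix a a.
Proof. by exists (idp (src a)); rewrite rng_idp comp_idr. Qed.

Lemma prefix_trans a b c : prefix a b -> prefix b c -> prefix a c.
Proof.
move=> [x [hx <-]] [y [hy <-]].
have hy' : src x = rng y by rewrite -hy src_comp.
exists (kcomp x y); rewrite rng_comp //; split => //.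
by rewrite kcompA.
Qed.

Lemma prefix_rng a b : prefix a b -> rng b = rng a.
Proof. by move=> [c [hc <-]]; rewrite rng_comp. Qed.

Lemma prefix_deg a b : prefix a b -> dle (deg a) (deg b).
Proof. by move=> [c [hc <-]] i; rewrite deg_comp // leq_addr. Qed.

Lemma prefix_comp a b : src a = rng b -> prefix a (kcomp a b).
Proof. by move=> h; exists b. Qed.

Lemma prefix_compl a b b' : src a = rng b -> src a = rng b' -> prefix b b' ->
  prefix (kcomp a b) (kcomp a b').
Proof.
move=> h h' [c [hc <-]]; exists c; split; first by rewrite src_comp.
by rewrite kcompA.
Qed.

Lemma dsplit (d m : 'I_k -> nat) : dle m d -> forall j, d j = (m j + (d j - m j))%N.
Proof. by move=> h j; rewrite subnKC. Qed.

Lemma e_le (d : 'I_k -> nat) (i : 'I_k) : (0 < d i)%N -> dle (e_ i) d.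
Proof. by move=> h j; rewrite /e_; case: eqP => // ->. Qed.

Lemma edge_of_deg l (i : 'I_k) : (0 < deg l i)%N -> has_path_deg (rng l) (e_ i).
Proof.
move=> hp.
have [mu [nu [h1 h2 h3 h4]]] := @factorisation _ L l (e_ i) (fun j => deg l j - e_ i j)%N
   (dsplit (e_le hp)).
exists mu; split; last by [].
by rewrite -h2 rng_comp.
Qed.

Lemma noedge_deg0 l (i : 'I_k) : ~ has_path_deg (rng l) (e_ i) -> deg l i = 0%N.
Proof. by move=> h; case: (posnP (deg l i)) => // /edge_of_deg. Qed.

Lemma e_ii (i : 'I_k) : e_ i i = 1%N.
Proof. by rewrite /e_ eqxx. Qed.

Lemma e_ij (i j : 'I_k) : j != i -> e_ i j = 0%N.
Proof. by rewrite /e_ => /negbTE ->. Qed.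

Hypothesis LC : locally_convex L.

Lemma push_edge_aux N l (i : 'I_k) : (\sum_j deg l j <= N)%N ->
  has_path_deg (rng l) (e_ i) -> deg l i = 0%N -> has_path_deg (src l) (e_ i).
Proof.
elim: N l => [|N IH] l hN he hi.
  have h0 : forall j, deg l j = 0%N.
    move=> j; apply/eqP; rewrite -leqn0; apply: leq_trans hN.
    by rewrite (bigD1 j) //= leq_addr.
  by rewrite (deg0_rs h0).
case: (boolP [exists j, 0 < deg l j]%N) => [/existsP [j hj]|hno]; last first.
  have h0 : forall j, deg l j = 0%N.
    move=> j; apply/eqP; rewrite -leqn0 leqNgt; apply/negP => hj.
    by move/existsP: hno; apply; exists j.
  by rewrite (deg0_rs h0).
have [f [nu [h1 h2 h3 h4]]] := @factorisation _ L l (e_ j) (fun t => deg l t - e_ j t)%N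
   (dsplit (e_le hj)).
have ji : i != j by apply/eqP => eij; move: hj; rewrite -eij hi.
have [he1 _] := he.
case: he => e [re de].
have rf : rng f = rng l by rewrite -h2 rng_comp.
have [_ hs] := LC ji (l:=e) (m:=f) (etrans re (esym rf)) de h3.
have -> : src l = src nu by rewrite -h2 src_comp.
apply: IH.
- have : (\sum_t deg l t = \sum_t deg f t + \sum_t deg nu t)%N.
    by rewrite -big_split /=; apply: eq_bigr => t _; rewrite -h2 deg_comp.
  have : (\sum_t deg f t = 1)%N.
    rewrite (bigD1 j) //= h3 e_ii big1 // => t tj; by rewrite h3 e_ij.
  move=> -> e2; move: hN; rewrite e2; by rewrite add1n ltnS.
- by rewrite -h1.
- by rewrite h4 hi e_ij.
Qed.

Lemma push_edge l (i : 'I_k) :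
  has_path_deg (rng l) (e_ i) -> deg l i = 0%N -> has_path_deg (src l) (e_ i).
Proof. exact: (@push_edge_aux (\sum_j deg l j)). Qed.


Lemma prefix_deg_formula n a b : in_le n a -> prefix a b ->
  forall i, deg a i = minn (n i) (deg b i).
Proof.
move=> [hle hsrc] [c [hc <-]] i.
rewrite deg_comp //.
case: (ltnP (deg a i) (n i)) => h.
  have -> : deg c i = 0%N by apply: noedge_deg0; rewrite -hc; apply: hsrc.
  by rewrite addn0; apply/esym/minn_idPr/ltnW.
have e : deg a i = n i by apply/eqP; rewrite eqn_leq hle.
by rewrite e; apply/esym/minn_idPl; rewrite leq_addr.
Qed.

Lemma prefix_of_deg a b (m : kpath L) : prefix a m -> prefix b m -> dle (deg a) (deg b) -> prefix a b.
Proof.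
move=> [c [hc ec]] [d [hd ed]] hle.
have hc' : dle (fun i => deg b i - deg a i)%N (deg c).
  move=> i; have := prefix_deg (prefix_comp hd) i; rewrite ed -ec deg_comp //.
  by rewrite leq_subLR.
have [c1 [c2 [h1 h2 h3 h4]]] := @factorisation _ L c _ _ (dsplit hc').
have hac1 : src a = rng c1 by rewrite hc -h2 rng_comp.
have e : kcomp b d = kcomp (kcomp a c1) c2.
  by rewrite ed -ec -h2 kcompA.
have [-> _] := factorisation_uniq hd (etrans (src_comp hac1) h1) e
   (fun i => ltac:(rewrite deg_comp // h3 subnKC //)).
by exists c1.
Qed.

Lemma prefix_uniq n a b m : in_le n a -> in_le n b -> prefix a m -> prefix b m -> a = b.
Proof.
move=> ha hb pa pb.
have dd : forall i, deg a i = deg b i.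
  by move=> i; rewrite (prefix_deg_formula ha pa) (prefix_deg_formula hb pb).
have [c [hc ec]] := prefix_of_deg pa pb (fun i => ltac:(rewrite dd //)).
have c0 : forall i, deg c i = 0%N.
  by move=> i; have := dd i; rewrite -ec deg_comp // => /eqP; rewrite -{1}(addn0 (deg a i)) eqn_add2l => /eqP <-.
by rewrite -ec (deg0_id c0) -hc comp_idr.
Qed.

Lemma in_le_comp p q a b : in_le p a -> in_le q b -> src a = rng b ->
  in_le (fun i => p i + q i)%N (kcomp a b).
Proof.
move=> [ha1 ha2] [hb1 hb2] hab; split.
  by move=> i; rewrite deg_comp // leq_add.
move=> i; rewrite deg_comp // src_comp // => hlt.
case: (ltnP (deg b i) (q i)) => hb; first exact: hb2.
have hai : (deg a i < p i)%N by lia.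
move=> [e [re de]].
apply: (ha2 i hai).
have he : src b = rng e by [].
have := @edge_of_deg (kcomp b e) i; rewrite rng_comp // -hab; apply.
by rewrite deg_comp // de e_ii addn1.
Qed.

Lemma in_le_rem (m : 'I_k -> nat) a c : in_le m (kcomp a c) -> src a = rng c -> dle (deg a) m ->
  in_le (fun i => m i - deg a i)%N c.
Proof.
move=> [h1 h2] hac hd; split.
  by move=> i; have := h1 i; have := hd i; rewrite deg_comp //; lia.
move=> i hi; rewrite -(src_comp hac); apply: h2.
by have := hd i; rewrite deg_comp //; lia.
Qed.

Lemma in_le_id v n : ~ (exists i, (0 < n i)%N /\ has_path_deg v (e_ i)) -> in_le n (idp v).
Proof.
move=> h; split; first by move=> i; rewrite deg_idp.
move=> i; rewrite deg_idp src_idp => hi he; apply: h; by exists i.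
Qed.

Lemma truncate (m : 'I_k -> nat) n b : in_le m b -> dle n m -> exists a, in_le n a /\ prefix a b.
Proof.
move=> [hb1 hb2] hnm.
have hd : dle (fun i => minn (n i) (deg b i)) (deg b) by move=> i; rewrite geq_minr.
have [a [c [h1 h2 h3 h4]]] := @factorisation _ L b _ _ (dsplit hd).
exists a; split; last by exists c.
split; first by move=> i; rewrite h3 geq_minl.
move=> i; rewrite h3 => hi he.
have hbi : (deg b i < n i)%N.
  by move: hi; lia.
have eb : minn (n i) (deg b i) = deg b i by apply/minn_idPr/ltnW.
have c0 : deg c i = 0%N by rewrite h4 eb subnn.
have := push_edge (l:=c) (i:=i); rewrite -h1 => /(_ he c0).
rewrite -(src_comp h1) h2; apply: hb2; exact: (leq_trans hbi (hnm i)).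
Qed.

End Graph.

Lemma enum_le (k : nat) (L : kgraph k) (RF : row_finite L) (v : vert L) (n : 'I_k -> nat) :
  exists es : seq (kpath L), uniq es /\ forall l, l \in es <-> (rng l = v /\ in_le n l).
Proof.
pose N := (\sum_i n i).+1.
pose pick (f : {ffun 'I_k -> 'I_N}) := projT1 (cid (RF v (fun i => nat_of_ord (f i)))).
have pickP : forall (f : {ffun 'I_k -> 'I_N}) l, rng l = v -> (forall j, deg l j = f j) -> l \in pick f.
  by move=> f; rewrite /pick; exact: (projT2 (cid (RF v (fun i => nat_of_ord (f i))))).
pose all := flatten [seq pick f | f <- enum {ffun 'I_k -> 'I_N}].
exists (undup [seq l <- all | `[< rng l = v /\ in_le n l >]]).
split; first exact: undup_uniq.
move=> l; rewrite mem_undup mem_filter; split.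
  by move=> /andP [/asboolP h _].
move=> h; apply/andP; split; first exact/asboolP.
have hlt : forall i, (deg l i < N)%N.
  move=> i; rewrite /N ltnS; apply: leq_trans (proj1 h.2 i) _.
  by rewrite (bigD1 i) //= leq_addr.
apply/flatten_mapP; exists [ffun i => Ordinal (hlt i)]; first by rewrite mem_enum.
by apply: pickP; [exact: h.1 | move=> j; rewrite ffunE].
Qed.

Section Alg.
Variables (R : comNzRingType) (A : nualg R).
Local Notation mul := (@nua_mul R A).

Lemma mul0a (c : A) : mul 0 c = 0.
Proof.
have := nua_mulDl 0 0 c; rewrite addr0 => e.
by apply: (addrI (mul 0 c)); rewrite addr0 -e.
Qed.

Lemma mula0 (c : A) : mul c 0 = 0.
Proof.
have := nua_mulDr c 0 0; rewrite addr0 => e.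
by apply: (addrI (mul c 0)); rewrite addr0 -e.
Qed.

Lemma mul_suml (I : Type) (r : seq I) (f : I -> A) c :
  mul (\sum_(i <- r) f i) c = \sum_(i <- r) mul (f i) c.
Proof.
elim: r => [|x r IH]; first by rewrite !big_nil mul0a.
by rewrite !big_cons nua_mulDl IH.
Qed.

Lemma mul_sumr (I : Type) (r : seq I) (f : I -> A) c :
  mul c (\sum_(i <- r) f i) = \sum_(i <- r) mul c (f i).
Proof.
elim: r => [|x r IH]; first by rewrite !big_nil mula0.
by rewrite !big_cons nua_mulDr IH.
Qed.
End Alg.

Section KPfacts.
Variables (k : nat) (L : kgraph k) (R : comNzRingType) (A : nualg R) (F : kpdata L A).
Hypothesis HF : is_KP_family F.
Local Notation mul := (@nua_mul R A).
Local Notation p := (kp_p F).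
Local Notation s := (kp_s F).
Local Notation ss := (kp_ss F).

Lemma KPpp v : mul (p v) (p v) = p v.
Proof. by have [K1 [K1' [K2 [K2' [K3 K4]]]]] := HF. Qed.
Lemma KPpq v w : v != w -> mul (p v) (p w) = 0.
Proof. by have [K1 [K1' [K2 [K2' [K3 K4]]]]] := HF; apply: K1'. Qed.
Lemma KPss l m : src l = rng m -> mul (s l) (s m) = s (kcomp l m).
Proof. by have [K1 [K1' [K2 [K2' [K3 K4]]]]] := HF => /K2 []. Qed.
Lemma KPstst l m : src l = rng m -> mul (ss m) (ss l) = ss (kcomp l m).
Proof. by have [K1 [K1' [K2 [K2' [K3 K4]]]]] := HF => /K2 []. Qed.
Lemma KPps l : mul (p (rng l)) (s l) = s l.
Proof. by have [K1 [K1' [K2 [K2' [K3 K4]]]]] := HF; case: (K2' l). Qed.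
Lemma KPsp l : mul (s l) (p (src l)) = s l.
Proof. by have [K1 [K1' [K2 [K2' [K3 K4]]]]] := HF; case: (K2' l) => _ []. Qed.
Lemma KPpst l : mul (p (src l)) (ss l) = ss l.
Proof. by have [K1 [K1' [K2 [K2' [K3 K4]]]]] := HF; case: (K2' l) => _ [_ []]. Qed.
Lemma KPstp l : mul (ss l) (p (rng l)) = ss l.
Proof. by have [K1 [K1' [K2 [K2' [K3 K4]]]]] := HF; case: (K2' l) => _ [_ []]. Qed.
Lemma KP3 (n : 'I_k -> nat) l m : nonzero_deg n -> in_le n l -> in_le n m ->
     mul (ss l) (s m) = if l == m then p (src l) else 0.
Proof. by have [K1 [K1' [K2 [K2' [K3 K4]]]]] := HF; apply: K3. Qed.
Lemma KP4 v (n : 'I_k -> nat) (es : seq (kpath L)) : nonzero_deg n ->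
     uniq es -> (forall l, l \in es <-> (rng l = v /\ in_le n l)) ->
     p v = \sum_(l <- es) mul (s l) (ss l).
Proof. by have [K1 [K1' [K2 [K2' [K3 K4]]]]] := HF; apply: K4. Qed.

Lemma KPps0 w l : w != rng l -> mul (p w) (s l) = 0.
Proof. by move=> h; rewrite -KPps nua_mulA KPpq // mul0a. Qed.
Lemma KPsp0 w l : src l != w -> mul (s l) (p w) = 0.
Proof. by move=> h; rewrite -KPsp -nua_mulA KPpq // mula0. Qed.
Lemma KPpst0 w l : w != src l -> mul (p w) (ss l) = 0.
Proof. by move=> h; rewrite -KPpst nua_mulA KPpq // mul0a. Qed.
Lemma KPstp0 w l : rng l != w -> mul (ss l) (p w) = 0.
Proof. by move=> h; rewrite -KPstp -nua_mulA KPpq // mula0. Qed.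
Lemma KPss0 l m : src l != rng m -> mul (s l) (s m) = 0.
Proof. by move=> h; rewrite -KPsp -nua_mulA KPps0 // mula0. Qed.
Lemma KPstst0 l m : src l != rng m -> mul (ss m) (ss l) = 0.
Proof. by move=> h; rewrite -KPstp -nua_mulA KPpst0 1?eq_sym // mula0. Qed.
Lemma KPsts0 l m : rng l != rng m -> mul (ss l) (s m) = 0.
Proof. by move=> h; rewrite -KPstp -nua_mulA KPps0 // mula0. Qed.

Lemma in_le_self (l : kpath L) : in_le (deg l) l.
Proof. by split => // i; rewrite ltnn. Qed.

End KPfacts.

Section Span.
Variables (k : nat) (L : kgraph k) (R : comNzRingType) (A : nualg R) (F : kpdata L A).
Hypothesis HF : is_KP_family F.
Hypothesis RF : row_finite L.
Hypothesis LC : locally_convex L.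
Hypothesis k1 : (0 < k)%N.
Local Notation mul := (@nua_mul R A).
Local Notation p := (kp_p F).
Local Notation s := (kp_s F).
Local Notation ss := (kp_ss F).

Definition one : 'I_k -> nat := fun _ => 1%N.
Lemma one_nz : nonzero_deg one.
Proof. by exists (Ordinal k1). Qed.

Lemma p_expand v : exists es : seq (kpath L),
  (forall l, l \in es -> rng l = v) /\ p v = \sum_(l <- es) mul (s l) (ss l).
Proof.
have [es [ues hes]] := enum_le RF v one.
exists es; split; first by move=> l /hes [].
exact: (KP4 HF one_nz ues hes).
Qed.

Lemma s_id v : s (idp v) = p v.
Proof.
have [es [hr e]] := p_expand v.
rewrite -(KPsp HF (idp v)) src_idp e mul_sumr.
apply: eq_big_seq => l /hr hl.
rewrite nua_mulA KPss ?src_idp ?hl //.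
by have := comp_idl l; rewrite hl => ->.
Qed.

Lemma ss_id v : ss (idp v) = p v.
Proof.
rewrite -(KPpst HF (idp v)) src_idp.
have [es [hr e]] := p_expand v; rewrite e mul_suml.
apply: eq_big_seq => l /hr hl.
rewrite -nua_mulA KPstst ?src_idp ?hl //.
by have := comp_idl l; rewrite hl => ->.
Qed.

Inductive Sp : A -> Prop :=
 | Sp0 : Sp 0
 | SpD a b : Sp a -> Sp b -> Sp (a + b)
 | SpZ (r : R) a : Sp a -> Sp (r *: a)
 | SpM a b : src a = src b -> Sp (mul (s a) (ss b)).

Lemma Sp_sum (I : eqType) (r : seq I) (f : I -> A) : (forall i, i \in r -> Sp (f i)) ->
  Sp (\sum_(i <- r) f i).
Proof.
elim: r => [|x r IH] h; first by rewrite big_nil; apply: Sp0.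
rewrite big_cons; apply: SpD; first by apply: h; rewrite mem_head.
by apply: IH => i hi; apply: h; rewrite in_cons hi orbT.
Qed.

Lemma half1 (b lam : kpath L) (n : 'I_k -> nat) : in_le n lam -> rng lam = rng b ->
  dle (deg b) n ->
  mul (ss b) (s lam) = 0 \/ exists x, src x = src lam /\ mul (ss b) (s lam) = s x.
Proof.
move=> hl hr hd.
have [l1 [hl1 [c [hc ec]]]] := truncate LC hl hd.
case: (pselect (nonzero_deg (deg b))) => [nz|z]; last first.
  have d0 : forall i, deg b i = 0%N.
    by move=> i; case: (deg b i =P 0%N) => // h; exfalso; apply: z; exists i.
  right; exists lam; split => //.
  by rewrite (deg0_id d0) ss_id -hr KPps.
rewrite -ec -KPss // nua_mulA (KP3 HF nz (in_le_self b) hl1).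
case: eqP => [eb|]; last by left; rewrite mul0a.
right; exists c; split; first by rewrite src_comp.
by rewrite eb hc KPps.
Qed.

Lemma half2 (g lam : kpath L) (n : 'I_k -> nat) : in_le n lam -> rng lam = rng g ->
  dle (deg g) n ->
  mul (ss lam) (s g) = 0 \/ exists y, src y = src lam /\ mul (ss lam) (s g) = ss y.
Proof.
move=> hl hr hd.
have [l1 [hl1 [c [hc ec]]]] := truncate LC hl hd.
case: (pselect (nonzero_deg (deg g))) => [nz|z]; last first.
  have d0 : forall i, deg g i = 0%N.
    by move=> i; case: (deg g i =P 0%N) => // h; exfalso; apply: z; exists i.
  right; exists lam; split => //.
  by rewrite (deg0_id d0) s_id -hr KPstp.
rewrite -ec -KPstst // -nua_mulA (KP3 HF nz hl1 (in_le_self g)).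
case: eqP => [eb|]; last by left; rewrite mula0.
right; exists c; split; first by rewrite src_comp.
by rewrite hc KPstp.
Qed.

Lemma key (b g : kpath L) : Sp (mul (ss b) (s g)).
Proof.
case: (eqVneq (rng b) (rng g)) => [e|ne]; last by rewrite KPsts0 //; apply: Sp0.
pose n := fun i => (maxn (deg b i) (deg g i)).+1.
have [es [ues hes]] := enum_le RF (rng b) n.
have nz : nonzero_deg n by exists (Ordinal k1).
have := KPstp HF b; rewrite (KP4 HF nz ues hes) mul_sumr => <-.
rewrite mul_suml; apply: Sp_sum => l /hes [hr hl].
rewrite [mul (ss b) (mul _ _)]nua_mulA -nua_mulA.
have hdb : dle (deg b) n by move=> i; rewrite /n ltnW // ltnS leq_maxl.
have hdg : dle (deg g) n by move=> i; rewrite /n ltnW // ltnS leq_maxr.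
have [h1|[x [hx e1]]] := half1 hl hr hdb; first by rewrite h1 mul0a; apply: Sp0.
have [h2|[y [hy e2]]] := half2 hl (etrans hr e) hdg; first by rewrite h2 mula0; apply: Sp0.
rewrite e1 e2; apply: SpM; by rewrite hx hy.
Qed.

Lemma Sp_sand (al de : kpath L) X : Sp X -> Sp (mul (s al) (mul X (ss de))).
Proof.
elim => [|a1 b1 _ IHa _ IHb|r a1 _ IH|a1 b1 hab].
- by rewrite mul0a mula0; apply: Sp0.
- by rewrite nua_mulDl nua_mulDr; apply: SpD.
- by rewrite nua_scalerAl nua_scalerAr; apply: SpZ.
rewrite -nua_mulA nua_mulA.
case: (eqVneq (src al) (rng a1)) => [h1|h1]; last by rewrite KPss0 // mul0a; apply: Sp0.
case: (eqVneq (src de) (rng b1)) => [h2|h2]; last by rewrite KPstst0 // mula0; apply: Sp0.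
rewrite KPss // KPstst //; apply: SpM.
by rewrite !src_comp.
Qed.

Lemma Sp_mul x y : Sp x -> Sp y -> Sp (mul x y).
Proof.
move=> ha; elim: ha y => [|a1 a2 _ IH1 _ IH2|r a _ IH|al be hab] b hb.
- by rewrite mul0a; apply: Sp0.
- by rewrite nua_mulDl; apply: SpD; [apply: IH1|apply: IH2].
- by rewrite nua_scalerAl; apply: SpZ; apply: IH.
elim: hb => [|b1 b2 _ IH1' _ IH2'|r' b' _ IH'|ga de hgd].
- by rewrite mula0; apply: Sp0.
- by rewrite nua_mulDr; apply: SpD.
- by rewrite nua_scalerAr; apply: SpZ.
rewrite -nua_mulA [mul (ss be) _]nua_mulA.
exact: Sp_sand (key be ga).
Qed.

Lemma Sp_p v : Sp (p v).
Proof.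
have [es [hr ->]] := p_expand v.
by apply: Sp_sum => l _; apply: SpM.
Qed.

Lemma Sp_s l : Sp (s l).
Proof.
rewrite -KPsp //; have [es [hr ->]] := p_expand (src l).
rewrite mul_sumr; apply: Sp_sum => m /hr hm.
by rewrite nua_mulA KPss // ?hm //; apply: SpM; rewrite src_comp ?hm.
Qed.

Lemma Sp_ss l : Sp (ss l).
Proof.
rewrite -KPpst //; have [es [hr ->]] := p_expand (src l).
rewrite mul_suml; apply: Sp_sum => m /hr hm.
by rewrite -nua_mulA KPstst // ?hm //; apply: SpM; rewrite src_comp ?hm.
Qed.

End Span.

Section Vanish.
Variables (k : nat) (L : kgraph k) (R : comNzRingType) (A : nualg R) (F : kpdata L A).
Hypothesis HKP : is_KP_algebra F.
Hypothesis RF : row_finite L.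
Hypothesis LC : locally_convex L.
Local Notation mul := (@nua_mul R A).
Local Notation p := (kp_p F).
Local Notation s := (kp_s F).
Local Notation ss := (kp_ss F).

Inductive Spz : A -> Prop :=
 | Spz0 : Spz 0
 | SpzD a b : Spz a -> Spz b -> Spz (a + b)
 | SpzZ (r : R) a : Spz a -> Spz (r *: a)
 | SpzM u x : Spz (mul (mul (p u) x) (p u)).

Lemma vanish (H : vert L -> Prop) (hH : hereditary H) v w :
  ~ (exists l, rng l = v /\ H (src l)) -> H w ->
  forall a, mul (mul (p v) a) (p w) = 0 /\ mul (mul (p w) a) (p v) = 0.
Proof.
have HF := proj1 HKP.
move=> hv hw.
have nvw : v != w.
  apply/eqP => e; apply: hv; exists (idp v); rewrite rng_idp src_idp; split => //.
  by rewrite e.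
case: (posnP k) => [k0|k1].
  have allid : forall l : kpath L, l = idp (rng l).
    by move=> l; apply: deg0_id => i; exfalso; case: i; rewrite k0.
  have SpAll : forall a, Spz a.
    apply: (KP_ind HKP); [exact: Spz0|exact: SpzD|exact: SpzZ| | | |].
    - move=> x y hx; elim: hx y => [|a1 a2 _ IH1 _ IH2|r a _ IH|u x0] y hy.
      + by rewrite mul0a; apply: Spz0.
      + by rewrite nua_mulDl; apply: SpzD; [apply: IH1|apply: IH2].
      + by rewrite nua_scalerAl; apply: SpzZ; apply: IH.
      elim: hy => [|b1 b2 _ IH1' _ IH2'|r' b' _ IH'|u' y0].
      + by rewrite mula0; apply: Spz0.
      + by rewrite nua_mulDr; apply: SpzD.
      + by rewrite nua_scalerAr; apply: SpzZ.
      case: (eqVneq u u') => [<-|nu].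
        have -> : mul (mul (mul (p u) x0) (p u)) (mul (mul (p u) y0) (p u)) =
                  mul (mul (p u) (mul (mul x0 (p u)) y0)) (p u).
          by rewrite !nua_mulA -[mul (mul (mul (p u) x0) (p u)) (p u)]nua_mulA KPpp.
        exact: SpzM.
      rewrite !nua_mulA -[mul (mul (mul (p u) x0) (p u)) (p u')]nua_mulA KPpq //.
      by rewrite mula0 !mul0a; apply: Spz0.
    - move=> u; have -> : p u = mul (mul (p u) (p u)) (p u) by rewrite !KPpp.
      exact: SpzM.
    - move=> l; have e : src l = rng l by rewrite {1}(allid l) src_idp.
      by rewrite -(KPsp HF l) -{1}(KPps HF l) e; apply: SpzM.
    - move=> l; have e : src l = rng l by rewrite {1}(allid l) src_idp.
      by rewrite -(KPstp HF l) -{1}(KPpst HF l) e; apply: SpzM.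
  move=> a; elim: (SpAll a) => [|a1 a2 _ [h1 h2] _ [h3 h4]|r a' _ [h1 h2]|u x].
  - by rewrite !mula0 !mul0a.
  - by rewrite !nua_mulDr !nua_mulDl h1 h2 h3 h4 !addr0.
  - by rewrite !nua_scalerAr !nua_scalerAl h1 h2 !scaler0.
  have z : forall c d, c != d -> forall y, mul (mul (p c) (mul (mul (p u) y) (p u))) (p d) = 0.
    move=> c d ab y.
    case: (eqVneq c u) => [eau|nau]; last first.
      by rewrite !nua_mulA KPpq // !mul0a.
    rewrite eau in ab.
    by rewrite !nua_mulA -[mul (mul _ (p u)) (p d)]nua_mulA (KPpq HF ab) mula0.
  by split; apply: z; rewrite // eq_sym.
have HF' := HF.
have SpAll : forall a, Sp F a.
  apply: (KP_ind HKP); [exact: Sp0|exact: SpD|exact: SpZ|exact: (Sp_mul HF RF LC k1)|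
     exact: (Sp_p HF RF k1)|exact: (Sp_s HF RF k1)|exact: (Sp_ss HF RF k1)].
move=> a; elim: (SpAll a) => [|a1 a2 _ [h1 h2] _ [h3 h4]|r a' _ [h1 h2]|al be hab].
- by rewrite !mula0 !mul0a.
- by rewrite !nua_mulDr !nua_mulDl h1 h2 h3 h4 !addr0.
- by rewrite !nua_scalerAr !nua_scalerAl h1 h2 !scaler0.
split; rewrite nua_mulA -nua_mulA.
- case: (eqVneq v (rng al)) => [ev|nv]; last by rewrite KPps0 // mul0a.
  case: (eqVneq (rng be) w) => [ew|nw]; last by rewrite KPstp0 // mula0.
  exfalso; apply: hv; exists al; split; first by [].
  by rewrite hab; apply: hH; rewrite ew.
- case: (eqVneq w (rng al)) => [ew|nw]; last by rewrite KPps0 // mul0a.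
  case: (eqVneq (rng be) v) => [ev|nv]; last by rewrite KPstp0 // mula0.
  exfalso; apply: hv; exists be; split; first by [].
  by rewrite -hab; apply: hH; rewrite -ew.
Qed.

End Vanish.

Section BPath.
Variables (k : nat) (L : kgraph k) (H : vert L -> Prop).
Hypothesis hH : hereditary H.
Hypothesis LC : locally_convex L.

Definition cst (N : nat) : 'I_k -> nat := fun _ => N.

Definition bseq (x : nat -> kpath L) : Prop :=
  [/\ forall N, in_le (cst N) (x N), forall N, prefix (x N) (x N.+1) &
      forall N, ~ H (src (x N))].

Record bpath := BP { bp :> nat -> kpath L; bpP : bseq bp }.

Lemma bp_inj (x y : bpath) : bp x = bp y -> x = y.
Proof.
case: x => x hx; case: y => y hy /= e; subst y.
by rewrite (Prop_irrelevance hx hy).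
Qed.

Lemma bp_ext (x y : bpath) : (forall N, x N = y N) -> x = y.
Proof. by move=> h; apply: bp_inj; apply: funext. Qed.

Lemma bp_in (x : bpath) N : in_le (cst N) (x N).
Proof. by case: x => x /= [h _ _]. Qed.
Lemma bp_nH (x : bpath) N : ~ H (src (x N)).
Proof. by case: x => x /= [_ _ h]. Qed.
Lemma bp_pre (x : bpath) N M : (N <= M)%N -> prefix (x N) (x M).
Proof.
case: x => x /= [_ h _]; elim: M => [|M IH].
  by rewrite leqn0 => /eqP ->; apply: prefix_refl.
rewrite leq_eqVlt => /orP [/eqP ->|]; first exact: prefix_refl.
by rewrite ltnS => /IH hh; apply: prefix_trans hh (h M).
Qed.

Definition brng (x : bpath) := rng (x 0%N).

Lemma bp_rng (x : bpath) N : rng (x N) = brng x.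
Proof. by rewrite /brng; apply: prefix_rng; apply: bp_pre. Qed.

Lemma prefix_nH (a b : kpath L) : prefix a b -> ~ H (src b) -> ~ H (src a).
Proof. by move=> [c [hc <-]] hb ha; apply: hb; rewrite src_comp //; apply: hH; rewrite -hc. Qed.

Lemma brng_nH (x : bpath) : ~ H (brng x).
Proof.
have h0 : forall i, deg (x 0%N) i = 0%N.
  by move=> i; apply/eqP; rewrite -leqn0; exact: (proj1 (bp_in x 0) i).
by rewrite /brng -(deg0_rs h0); apply: bp_nH.
Qed.

Definition CatR (l : kpath L) (y x : bpath) :=
  src l = brng y /\ forall N, prefix (x N) (kcomp l (y N)).

Lemma catR_rng l y x : CatR l y x -> brng x = rng l.
Proof.
by move=> [h1 h2]; rewrite /brng -(prefix_rng (h2 0%N)) rng_comp //.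
Qed.

Lemma catR_fun l y x x' : CatR l y x -> CatR l y x' -> x = x'.
Proof.
move=> [h1 h2] [_ h2']; apply: bp_ext => N.
exact: prefix_uniq (bp_in x N) (bp_in x' N) (h2 N) (h2' N).
Qed.

Definition dsum (l : kpath L) := (\sum_i deg l i)%N.
Lemma deg_le_dsum l i : (deg l i <= dsum l)%N.
Proof. by rewrite /dsum (bigD1 i) //= leq_addr. Qed.

Lemma catR_prefix l y x N : CatR l y x -> prefix (kcomp l (y N)) (x (N + dsum l)%N).
Proof.
move=> [h1 h2].
have hs : src l = rng (y N) by rewrite h1 bp_rng.
have hs' : src l = rng (y (N + dsum l)%N) by rewrite h1 bp_rng.
have p1 := h2 (N + dsum l)%N.
have p2 : prefix (kcomp l (y N)) (kcomp l (y (N + dsum l)%N)).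
  by apply: prefix_compl => //; apply: bp_pre; rewrite leq_addr.
apply: (prefix_of_deg p2 p1) => i.
rewrite (prefix_deg_formula (bp_in x _) p1) /cst.
have := deg_le_dsum l i; have := proj1 (bp_in y N) i; rewrite /cst.
have := prefix_deg p2 i.
rewrite !deg_comp //; lia.
Qed.

Lemma catR_inj l y y' x : CatR l y x -> CatR l y' x -> y = y'.
Proof.
move=> c c'; apply: bp_ext => N.
have [a [ha ea]] := catR_prefix N c.
have [b [hb eb]] := catR_prefix N c'.
case: c => [h1 _]; case: c' => [h1' _].
have hs : src l = rng (y N) by rewrite h1 bp_rng.
have hs' : src l = rng (y' N) by rewrite h1' bp_rng.
move: ha hb; rewrite !src_comp // => ha hb.
have e : kcomp l (kcomp (y N) a) = kcomp l (kcomp (y' N) b).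
  by rewrite !kcompA // ea eb.
have e2 := cancel_l (etrans hs (esym (rng_comp ha))) (etrans hs' (esym (rng_comp hb))) e.
apply: (prefix_uniq (bp_in y N) (bp_in y' N) (prefix_comp ha)).
by rewrite e2; apply: prefix_comp.
Qed.

Lemma catR_ex l y : src l = brng y -> exists x, CatR l y x.
Proof.
move=> hl.
have hs : forall N, src l = rng (y N) by move=> N; rewrite hl bp_rng.
have tr : forall N, exists a, in_le (cst N) a /\ prefix a (kcomp l (y N)).
  move=> N; apply: (truncate LC (in_le_comp (in_le_self l) (bp_in y N) (hs N))).
  by move=> i; rewrite /cst leq_addl.
pose x N := projT1 (cid (tr N)).
have xP : forall N, in_le (cst N) (x N) /\ prefix (x N) (kcomp l (y N)).
  by move=> N; rewrite /x; case: (cid (tr N)).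
have bx : bseq x.
  split.
  - by move=> N; case: (xP N).
  - move=> N.
    have [t [ht pt]] := truncate LC (proj1 (xP N.+1)) (fun i => leqnSn N).
    have pN : prefix (x N) (kcomp l (y N.+1)).
      apply: prefix_trans (proj2 (xP N)) _; apply: prefix_compl => //; exact: bp_pre.
    have -> : x N = t.
      apply: (prefix_uniq (proj1 (xP N)) ht pN).
      exact: prefix_trans pt (proj2 (xP N.+1)).
    exact: pt.
  - move=> N; apply: prefix_nH (proj2 (xP N)) _.
    rewrite src_comp //; exact: bp_nH.
exists (BP bx); split => // N.
exact: (proj2 (xP N)).
Qed.

Lemma prefix_cancel (l a b : kpath L) : src l = rng a -> src l = rng b ->
  prefix (kcomp l a) (kcomp l b) -> prefix a b.
Proof.
move=> ha hb [c [hc e]].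
rewrite src_comp // in hc.
exists c; split => //.
apply: (@cancel_l _ _ l); [by rewrite rng_comp | exact: hb | by rewrite kcompA].
Qed.

Lemma catR_shift l (x : bpath) M : prefix l (x M) -> exists y, CatR l y x.
Proof.
move=> hp.
have hz : forall N, exists z, src l = rng z /\ kcomp l z = x (N + M)%N.
  move=> N; have [z [hz ez]] := prefix_trans hp (bp_pre x (leq_addl N M)).
  by exists z.
pose z N := projT1 (cid (hz N)).
have zP : forall N, src l = rng (z N) /\ kcomp l (z N) = x (N + M)%N.
  by move=> N; rewrite /z; case: (cid (hz N)).
have dl : forall i, (deg l i <= M)%N.
  move=> i; apply: leq_trans (prefix_deg hp i) _; exact: (proj1 (bp_in x M) i).
have zin : forall N, in_le (fun i => N + M - deg l i)%N (z N).
  move=> N; apply: in_le_rem (proj1 (zP N)) _.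
    by rewrite (proj2 (zP N)); apply: bp_in.
  by move=> i; rewrite /cst; apply: leq_trans (dl i) (leq_addl _ _).
have tr : forall N, exists t, in_le (cst N) t /\ prefix t (z N).
  move=> N; apply: (truncate LC (zin N)) => i.
  by rewrite /cst; have := dl i; lia.
pose y N := projT1 (cid (tr N)).
have yP : forall N, in_le (cst N) (y N) /\ prefix (y N) (z N).
  by move=> N; rewrite /y; case: (cid (tr N)).
have zz : forall N, prefix (z N) (z N.+1).
  move=> N; apply: (prefix_cancel (proj1 (zP N)) (proj1 (zP N.+1))).
  by rewrite (proj2 (zP N)) (proj2 (zP N.+1)); apply: bp_pre; rewrite addSn.
have by_ : bseq y.
  split.
  - by move=> N; case: (yP N).
  - move=> N.
    have [t [ht pt]] := truncate LC (proj1 (yP N.+1)) (fun i => leqnSn N).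
    have -> : y N = t.
      apply: (prefix_uniq (proj1 (yP N)) ht (prefix_trans (proj2 (yP N)) (zz N))).
      exact: prefix_trans pt (proj2 (yP N.+1)).
    exact: pt.
  - move=> N; apply: prefix_nH (proj2 (yP N)) _.
    have := @bp_nH x (N + M)%N; rewrite -(proj2 (zP N)) src_comp //.
    exact: (proj1 (zP N)).
exists (BP by_); split.
  rewrite /brng /= -(prefix_rng (proj2 (yP 0%N))); exact: (proj1 (zP 0%N)).
move=> N /=.
have hsy : src l = rng (y N) by rewrite (proj1 (zP N)) (prefix_rng (proj2 (yP N))).
have p1 : prefix (x N) (x (N + M)%N) by apply: bp_pre; rewrite leq_addr.
have p2 : prefix (kcomp l (y N)) (x (N + M)%N).
  rewrite -(proj2 (zP N)); apply: prefix_compl => //; first exact: (proj1 (zP N)).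
  exact: (proj2 (yP N)).
apply: (prefix_of_deg p1 p2) => i.
rewrite (prefix_deg_formula (bp_in x N) p1) deg_comp //.
rewrite (prefix_deg_formula (proj1 (yP N)) (proj2 (yP N))) /cst.
rewrite -(proj2 (zP N)) deg_comp //; first by lia.
exact: (proj1 (zP N)).
Qed.

Lemma catR_comp l m z x : src l = rng m ->
  CatR (kcomp l m) z x <-> exists y, CatR l y x /\ CatR m z y.
Proof.
move=> hlm; split.
  move=> [h1 h2].
  rewrite src_comp // in h1.
  have [y hy] := catR_ex h1.
  exists y; split => //.
  have ry := catR_rng hy.
  split; first by rewrite ry.
  move=> N.
  have hsz : src m = rng (z N) by rewrite h1 bp_rng.
  have hsy : src l = rng (y N) by rewrite bp_rng ry.
  have p1 := h2 N.
  have p2 : prefix (kcomp l (y N)) (kcomp (kcomp l m) (z N)).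
    rewrite -kcompA //; apply: prefix_compl => //; first by rewrite rng_comp.
    exact: (proj2 hy N).
  apply: (prefix_of_deg p1 p2) => i.
  rewrite (prefix_deg_formula (bp_in x N) p1).
  rewrite (deg_comp hsy) (prefix_deg_formula (bp_in y N) (proj2 hy N)) /cst.
  have hs2 : src (kcomp l m) = rng (z N) by rewrite src_comp.
  rewrite (deg_comp hs2) (deg_comp hlm) (deg_comp hsz); lia.
move=> [y [[h1 h2] [h3 h4]]].
have ry : brng y = rng m by apply: (catR_rng (conj h3 h4)).
split; first by rewrite src_comp.
move=> N.
have hsz : src m = rng (z N) by rewrite h3 bp_rng.
have hsy : src l = rng (y N) by rewrite bp_rng ry.
apply: prefix_trans (h2 N) _.
rewrite -kcompA //; apply: prefix_compl => //; first by rewrite rng_comp.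
Qed.

Lemma catR_ex_prefix l y x : CatR l y x -> prefix l (x (dsum l)).
Proof.
move=> c; have := catR_prefix 0%N c; rewrite add0n.
apply: prefix_trans; apply: prefix_comp.
by case: c => h _; rewrite h bp_rng.
Qed.

Lemma catR_uniq_le (n : 'I_k -> nat) l l' y y' x : in_le n l -> in_le n l' ->
  CatR l y x -> CatR l' y' x -> l = l'.
Proof.
move=> hl hl' c c'.
have p := prefix_trans (catR_ex_prefix c) (bp_pre x (leq_addr (dsum l') (dsum l))).
have p' := prefix_trans (catR_ex_prefix c') (bp_pre x (leq_addl (dsum l) (dsum l'))).
exact: prefix_uniq hl hl' p p'.
Qed.

Lemma catR_exists_le (n : 'I_k -> nat) (x : bpath) :
  exists l, in_le n l /\ rng l = brng x /\ exists y, CatR l y x.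
Proof.
have hd : dle n (cst (\sum_i n i)%N).
  by move=> i; rewrite /cst (bigD1 i) //= leq_addr.
have [l [hl pl]] := truncate LC (bp_in x (\sum_i n i)%N) hd.
exists l; split => //; split; first by rewrite -(prefix_rng pl) bp_rng.
exact: catR_shift pl.
Qed.

End BPath.

Lemma in_le_ext (k : nat) (L : kgraph k) (n n' : 'I_k -> nat) (l : kpath L) :
  (forall i, n i = n' i) -> in_le n l -> in_le n' l.
Proof. by move=> e [h1 h2]; split => i; rewrite -e; [apply: h1|apply: h2]. Qed.

Section Exist.
Variables (k : nat) (L : kgraph k) (H : vert L -> Prop).
Hypothesis hH : hereditary H.
Hypothesis sH : saturated H.

Lemma ext_step (a : vert L) : ~ H a ->
  forall n, exists mu, rng mu = a /\ in_le n mu /\ ~ H (src mu).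
Proof.
move=> ha n.
suff : forall S n, (\sum_i n i <= S)%N -> exists mu, rng mu = a /\ in_le n mu /\ ~ H (src mu).
  by apply; apply: leqnn.
elim=> [|S IH] {}n hS.
  exists (idp a); rewrite rng_idp src_idp; split => //; split => //.
  apply: in_le_id => [[i [hi _]]].
  by move: hS; rewrite (bigD1 i) //=; move: hi; case: (n i).
case: (pselect (exists i, 0 < n i)%N) => [[i hi]|hno].
  pose n' := fun j => (n j - e_ i j)%N.
  have hS' : (\sum_j n' j <= S)%N.
    have e1 : forall j, n j = (n' j + e_ i j)%N.
      by move=> j; rewrite /n' subnK // (e_le hi j).
    have se : (\sum_j e_ i j = 1)%N.
      by rewrite (bigD1 i) //= e_ii big1 // => j ji; rewrite e_ij.
    have : (\sum_j n j = \sum_j n' j + \sum_j e_ i j)%N.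
      by rewrite -big_split; apply: eq_bigr => j _; apply: e1.
    rewrite se.
    by move: hS; lia.
  have [mu [hr [hl hn]]] := IH n' hS'.
  have : ~ (forall l, rng l = src mu -> in_le (e_ i) l -> H (src l)).
    by move=> hall; apply: hn; apply: sH; exists i.
  move=> /existsNP [l /not_implyP [hrl /not_implyP [hle hnl]]].
  exists (kcomp mu l); rewrite rng_comp // src_comp //; split => //; split => //.
  apply: in_le_ext (in_le_comp hl hle (esym hrl)) => j.
  by rewrite /n'; move: (e_le hi j); lia.
exists (idp a); rewrite rng_idp src_idp; split => //; split => //.
apply: in_le_id => [[i [hi _]]]; apply: hno; by exists i.
Qed.

Lemma bpath_ex u : ~ H u -> exists x : bpath H, brng x = u.
Proof.
move=> hu.
pose step (a : kpath L) : kpath L :=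
  match pselect (~ H (src a)) with
  | left h => projT1 (cid (ext_step h (@cst k 1)))
  | right _ => idp (src a) end.
have stepP : forall a, ~ H (src a) ->
   rng (step a) = src a /\ in_le (@cst k 1) (step a) /\ ~ H (src (step a)).
  move=> a h; rewrite /step; case: pselect => // h'.
  by case: (cid (ext_step h' (@cst k 1))).
pose x N := iter N (fun a => kcomp a (step a)) (idp u).
have xP : forall N, [/\ in_le (@cst k N) (x N), ~ H (src (x N)) & rng (x N) = u].
  elim=> [|N [h1 h2 h3]].
    rewrite /x /= src_idp rng_idp; split => //.
    apply: in_le_id => [[i [hi _]]]; by move: hi.
  have [s1 [s2 s3]] := stepP _ h2.
  rewrite /x iterS -/(x N); split.
  - by apply: in_le_ext (in_le_comp h1 s2 (esym s1)) => i; rewrite /cst addn1.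
  - by rewrite src_comp.
  - by rewrite rng_comp.
have bx : bseq H x.
  split.
  - by move=> N; case: (xP N).
  - move=> N; rewrite /x iterS -/(x N); apply: prefix_comp.
    by case: (xP N) => _ h2 _; case: (stepP _ h2).
  - by move=> N; case: (xP N).
by exists (BP bx); rewrite /brng /=; case: (xP 0%N).
Qed.
End Exist.

Lemma subl_S' (R : comNzRingType) (V : lmodType R) (S : lpred V) (x : subl S) : S (subl_val x).
Proof. by case: x => a Ha; apply/asboolP. Qed.

Section Rep.
Variables (k : nat) (L : kgraph k) (R : comNzRingType) (H : vert L -> Prop).
Hypothesis hH : hereditary H.
Hypothesis sH : saturated H.
Hypothesis LC : locally_convex L.

Local Notation X := (bpath H).
Definition Fn := X -> R^o.
Definition Op := Fn -> Fn.

Definition linP (f : Op) : Prop :=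
  (forall a b, f (a + b) = f a + f b) /\ (forall (r : R) a, f (r *: a) = r *: f a).

Lemma opE0 (a : Fn) : (0 : Op) a = 0. Proof. by []. Qed.
Lemma opED (f g : Op) a : (f + g) a = f a + g a. Proof. by []. Qed.
Lemma opEZ (r : R) (f : Op) a : (r *: f) a = r *: f a. Proof. by []. Qed.
Lemma linP0 : linP 0.
Proof. by split => [a b|r a]; rewrite !opE0 ?addr0 ?scaler0. Qed.
Lemma linPD f g : linP f -> linP g -> linP (f + g).
Proof.
move=> [f1 f2] [g1 g2]; split => [a b|r a]; rewrite !opED.
  by rewrite f1 g1 addrACA.
by rewrite f2 g2 scalerDr.
Qed.
Lemma linPZ (r : R) f : linP f -> linP (r *: f).
Proof.
move=> [f1 f2]; split => [a b|s a]; rewrite !opEZ.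
  by rewrite f1 scalerDr.
by rewrite f2 !scalerA mulrC.
Qed.
Definition LinPred : lpred Op := LPred linP0 linPD linPZ.
Definition Bc := subl LinPred.
Lemma linPc (f g : Op) : linP f -> linP g -> linP (f \o g).
Proof.
move=> [f1 f2] [g1 g2]; split => [a b|r a] /=.
  by rewrite g1 f1.
by rewrite g2 f2.
Qed.
Definition bval (f : Bc) : Op := subl_val f.
Lemma bvalP (f : Bc) : linP (bval f).
Proof. exact: (subl_S' f). Qed.
Definition mkB (f : Op) (h : linP f) : Bc := @SubL R Op LinPred f (asboolT h).
Definition bmul (f g : Bc) : Bc := mkB (linPc (bvalP f) (bvalP g)).

Lemma Bext (f g : Bc) : (forall phi x, bval f phi x = bval g phi x) -> f = g.
Proof.
move=> h; apply: val_inj; apply: funext => phi; apply: funext => x; exact: h.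
Qed.

Lemma bvalM (f g : Bc) : bval (bmul f g) = bval f \o bval g. Proof. reflexivity. Qed.
Lemma bvalD (f g : Bc) : bval (f + g) = bval f + bval g. Proof. exact: subl_valD. Qed.
Lemma bvalZ (r : R) (f : Bc) : bval (r *: f) = r *: bval f. Proof. exact: subl_valZ. Qed.
Lemma bval0 : bval 0 = 0. Proof. exact: subl_val0. Qed.

Lemma bmulA : forall a b c, bmul a (bmul b c) = bmul (bmul a b) c.
Proof. by move=> a b c; apply: Bext => phi x; rewrite !bvalM. Qed.
Lemma bmulDl : forall a b c, bmul (a + b) c = bmul a c + bmul b c.
Proof. by move=> a b c; apply: Bext => phi x; rewrite !bvalM !bvalD !opED !bvalM. Qed.
Lemma bmulDr : forall a b c, bmul a (b + c) = bmul a b + bmul a c.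
Proof.
move=> a b c; apply: Bext => phi x.
by rewrite bvalD !bvalM bvalD opED /= opED (proj1 (bvalP a)).
Qed.
Lemma bmulZl : forall (r : R) a b, bmul (r *: a) b = r *: bmul a b.
Proof. by move=> r a b; apply: Bext => phi x; rewrite !bvalM !bvalZ !opEZ !bvalM. Qed.
Lemma bmulZr : forall (r : R) a b, bmul a (r *: b) = r *: bmul a b.
Proof.
move=> r a b; apply: Bext => phi x.
by rewrite bvalZ !bvalM bvalZ opEZ /= opEZ (proj2 (bvalP a)).
Qed.
Definition Balg : nualg R := NUAlg bmulA bmulDl bmulDr bmulZl bmulZr.


Definition Pop (v : vert L) : Op := fun phi x => if brng x == v then phi x else 0.
Definition Sop (l : kpath L) : Op := fun phi x =>
  match pselect (exists y, CatR l y x) with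
  | left h => phi (projT1 (cid h)) | right _ => 0 end.
Definition SSop (l : kpath L) : Op := fun phi y =>
  match pselect (exists x, CatR l y x) with
  | left h => phi (projT1 (cid h)) | right _ => 0 end.

Lemma fnD (a b : Fn) x : (a + b) x = a x + b x. Proof. by []. Qed.
Lemma fnZ (r : R) (a : Fn) x : (r *: a) x = r *: a x. Proof. by []. Qed.

Lemma Pop_lin v : linP (Pop v).
Proof.
split => [a b|r a]; apply: funext => x; rewrite /Pop ?fnD ?fnZ; case: (brng x == v) => //.
  by rewrite addr0.
by rewrite scaler0.
Qed.
Lemma Sop_lin l : linP (Sop l).
Proof.
split => [a b|r a]; apply: funext => x; rewrite /Sop ?fnD ?fnZ; case: pselect => _ //.
  by rewrite addr0.
by rewrite scaler0.
Qed.
Lemma SSop_lin l : linP (SSop l).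
Proof.
split => [a b|r a]; apply: funext => x; rewrite /SSop ?fnD ?fnZ; case: pselect => _ //.
  by rewrite addr0.
by rewrite scaler0.
Qed.

Lemma Sop_eq l y x phi : CatR l y x -> Sop l phi x = phi y.
Proof.
move=> c; rewrite /Sop; case: pselect => [h|h]; last by exfalso; apply: h; exists y.
by case: (cid h) => y' hy' /=; rewrite (catR_inj hy' c).
Qed.
Lemma Sop_0 l x phi : ~ (exists y, CatR l y x) -> Sop l phi x = 0.
Proof. by move=> n; rewrite /Sop; case: pselect. Qed.
Lemma SSop_eq l y x phi : CatR l y x -> SSop l phi y = phi x.
Proof.
move=> c; rewrite /SSop; case: pselect => [h|h]; last by exfalso; apply: h; exists x.
by case: (cid h) => x' hx' /=; rewrite (catR_fun hx' c).
Qed.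
Lemma SSop_0 l y phi : ~ (exists x, CatR l y x) -> SSop l phi y = 0.
Proof. by move=> n; rewrite /SSop; case: pselect. Qed.

Definition Gfam : kpdata L Balg :=
  @KPData k L R Balg (fun v => mkB (Pop_lin v)) (fun l => mkB (Sop_lin l))
     (fun l => mkB (SSop_lin l)).

Lemma bval_mk (f : Op) (h : linP f) : bval (mkB h) = f. Proof. reflexivity. Qed.

Lemma Gfam_KP : is_KP_family Gfam.
Proof.
have E : forall (a b : Balg), nua_mul a b = bmul a b by [].
split; [|split; [|split; [|split; [|split]]]].
- move=> v; rewrite E; apply: Bext => phi x; rewrite bvalM !bval_mk /= /Pop.
  by case: eqP.
- move=> v w vw; rewrite E; apply: Bext => phi x; rewrite bvalM !bval_mk bval0 /= /Pop.
  case: (brng x =P v) => [ev|//]; case: (brng x =P w) => [ew|//].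
  by move: vw; rewrite -ev -ew eqxx.
- move=> l m lm; split; rewrite E; apply: Bext => phi x; rewrite bvalM !bval_mk /=.
  + case: (pselect (exists z, CatR (kcomp l m) z x)) => [[z hz]|nz].
      have [y [hy1 hy2]] := (proj1 (catR_comp hH LC z x lm) hz).
      by rewrite (Sop_eq _ hy1) (Sop_eq _ hy2) (Sop_eq _ hz).
    rewrite (Sop_0 _ nz).
    case: (pselect (exists y, CatR l y x)) => [[y hy]|ny]; last by rewrite Sop_0.
    rewrite (Sop_eq _ hy) Sop_0 // => [[z hz]]; apply: nz; exists z.
    by apply/(catR_comp hH LC z x lm); exists y.
  + case: (pselect (exists y, CatR (kcomp l m) x y)) => [[y hy]|ny].
      have [z [hz1 hz2]] := (proj1 (catR_comp hH LC x y lm) hy).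
      by rewrite (SSop_eq _ hz2) (SSop_eq _ hz1) (SSop_eq _ hy).
    rewrite (SSop_0 _ ny).
    case: (pselect (exists z, CatR m x z)) => [[z hz]|nz]; last by rewrite SSop_0.
    rewrite (SSop_eq _ hz) SSop_0 // => [[y hy]]; apply: ny; exists y.
    by apply/(catR_comp hH LC x y lm); exists z.
- move=> l; split; [|split; [|split]]; rewrite E; apply: Bext => phi x;
    rewrite bvalM !bval_mk /=.
  + rewrite /Pop; case: eqP => // ne.
    by rewrite Sop_0 // => [[y hy]]; apply: ne; apply: catR_rng hy.
  + case: (pselect (exists y, CatR l y x)) => [[y hy]|ny]; last by rewrite !Sop_0.
    rewrite !(Sop_eq _ hy) /Pop; case: eqP => // ne; exfalso; apply: ne.
    by case: hy.
  + rewrite /Pop; case: eqP => // ne.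
    by rewrite SSop_0 // => [[y hy]]; apply: ne; case: hy.
  + case: (pselect (exists y, CatR l x y)) => [[y hy]|ny]; last by rewrite !SSop_0.
    rewrite !(SSop_eq _ hy) /Pop; case: eqP => // ne; exfalso; apply: ne.
    exact: catR_rng hy.
- move=> n l m nz hl hm; rewrite E; case: eqP => [<-|ne].
    apply: Bext => phi y; rewrite bvalM !bval_mk /=.
    case: (pselect (exists x, CatR l y x)) => [[x hx]|nx].
      rewrite (SSop_eq _ hx) (Sop_eq _ hx) /Pop.
      by case: hx => -> _; rewrite eqxx.
    rewrite SSop_0 // /Pop; case: eqP => // e; exfalso; apply: nx.
    by apply: (catR_ex hH LC); rewrite e.
  apply: Bext => phi y; rewrite bvalM !bval_mk bval0 /=.
  case: (pselect (exists x, CatR l y x)) => [[x hx]|nx]; last by rewrite SSop_0.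
  rewrite (SSop_eq _ hx) Sop_0 // => [[z hz]]; apply: ne.
  exact: catR_uniq_le hl hm hx hz.
- move=> v n es nz ues hes; apply: Bext => phi x.
  rewrite bval_mk /bval subl_val_sum !fct_sumE.
  have term : forall l, subl_val (nua_mul (kp_s Gfam l) (kp_ss Gfam l)) phi x =
      if `[< exists y, CatR l y x >] then phi x else 0.
    move=> l; rewrite E -/(bval _) bvalM !bval_mk /=.
    case: (pselect (exists y, CatR l y x)) => [[y hy]|ny].
      rewrite (Sop_eq _ hy) (SSop_eq _ hy); case: asboolP => // h; exfalso; apply: h.
      by exists y.
    by rewrite Sop_0 //; case: asboolP.
  rewrite (eq_bigr _ (fun l _ => term l)) /Pop.
  case: eqP => [ev|nev].
    have [l0 [hl0 [rl0 [y0 hy0]]]] := catR_exists_le hH LC n x.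
    have l0es : l0 \in es by apply/hes; rewrite rl0.
    rewrite (bigD1_seq l0) //=.
    case: asboolP => [_|h]; last by exfalso; apply: h; exists y0.
    rewrite big_seq_cond big1 ?addr0 // => l /andP [les nl].
    case: asboolP => // [[y hy]]; exfalso; move/negP: nl; apply.
    apply/eqP; apply: (catR_uniq_le (proj2 (proj1 (hes l) les)) hl0 hy hy0).
  rewrite big_seq big1 // => l les.
  case: asboolP => // [[y hy]]; exfalso; apply: nev.
  by rewrite (catR_rng hy); case: (proj1 (hes l) les).
Qed.

Lemma Gfam_H w : H w -> kp_p Gfam w = 0.
Proof.
move=> hw; apply: Bext => phi x; rewrite bval_mk bval0 /= /Pop.
case: eqP => // e; exfalso; apply: (brng_nH (x := x)); by rewrite e.
Qed.

Lemma Gfam_nH u : ~ H u -> kp_p Gfam u <> 0.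
Proof.
move=> hu e.
have [x hx] := bpath_ex sH hu.
have : bval (kp_p Gfam u) (fun _ => 1) x = bval 0 (fun _ => 1) x by rewrite e.
rewrite bval_mk bval0 /= /Pop hx eqxx => /eqP.
by rewrite oner_eq0.
Qed.

End Rep.

Section Final.
Variables (k : nat) (L : kgraph k) (R : comNzRingType) (A : nualg R) (F : kpdata L A).
Hypothesis HKP : is_KP_algebra F.
Hypothesis LC : locally_convex L.
Local Notation mul := (@nua_mul R A).
Local Notation p := (kp_p F).
Local Notation s := (kp_s F).
Local Notation ss := (kp_ss F).

Lemma rep_conseq (H : vert L -> Prop) (hH : hereditary H) (sH : saturated H) u :
  ~ H u -> ~ ideal_of_vertices F H (p u) /\ p u <> 0.
Proof.
move=> hu.
have [[f [[f1 f2 f3] [fp [fs fss]]]] _] := (proj2 HKP) _ _ (Gfam_KP R hH LC).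
have f0 : f 0 = 0.
  have := f1 0 0; rewrite addr0 => e.
  by apply: (addrI (f 0)); rewrite addr0 -e.
have hnz := Gfam_nH (R:=R) sH hu.
split; last by move=> e; apply: hnz; rewrite -fp e f0.
move=> hJ; apply: hnz; rewrite -fp.
apply: (hJ (fun a => f a = 0)).
  split => //.
  - by move=> a b ha hb; rewrite f1 ha hb addr0.
  - by move=> r a ha; rewrite f2 ha scaler0.
  - by move=> a x hx; rewrite !f3 hx mula0 mul0a.
move=> y [w [hw ->]]; rewrite fp; exact: Gfam_H.
Qed.

Lemma gen_mul (S : A -> Prop) a x : gen_ideal S x -> gen_ideal S (mul a x).
Proof. move=> hx I hI hS; have [_ _ _ h] := hI; exact: (proj1 (h a x (hx I hI hS))). Qed.

Lemma False_sat : saturated (fun _ : vert L => False).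
Proof.
move=> v [i hall].
case: (pselect (has_path_deg v (e_ i))) => [[l [hl dl]]|nh].
  apply: (hall l hl); split; first by move=> j; rewrite dl.
  by move=> j; rewrite dl ltnn.
apply: (hall (idp v)); first by rewrite rng_idp.
apply: in_le_id => [[j [hj he]]]; apply: nh.
case: (eqVneq j i) => [<- //|ji]; by move: hj; rewrite e_ij.
Qed.

Lemma p_nz u : p u <> 0.
Proof.
by have [] := rep_conseq (H := fun _ => False) (fun _ h => h) False_sat (u := u) id.
Qed.

End Final.

Theorem mainTheorem6 (k : nat) (L : kgraph k) (R : comNzRingType)
    (A : nualg R) (F : kpdata L A) (H : vert L -> Prop) :
  row_finite L -> locally_convex L ->
  hereditary H -> saturated H ->
  is_KP_algebra F ->
  let J := ideal_of_vertices F H in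
  (forall v : vert L,
     HofI F (perp J) v <-> ~ (exists l : kpath L, rng l = v /\ H (src l))) /\
  (forall v : vert L,
     ~ (exists l : kpath L, rng l = v /\ H (src l)) <-> ~ HbarofI F J v).
Proof.
move=> RF LC hH sH HKP J.
have HF := proj1 HKP.
have HJ : forall u, J (kp_p F u) <-> H u.
  move=> u; split.
    move=> hJ; case: (pselect (H u)) => // hu.
    by have [] := rep_conseq HKP LC hH sH hu.
  by move=> hu I hI hS; apply: hS; exists u.
split; last first.
  move=> v; split => h1 h2; apply: h1.
    by case: h2 => l [hl hJ]; exists l; split => //; apply/HJ.
  by case: h2 => l [hl hJ]; exists l; split => //; apply/HJ.
move=> v; split.
  move=> hperp [l [hl hs]].
  have Js : J (kp_s F l).
    rewrite -(KPsp HF l); apply: gen_mul; exact/HJ.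
  have s0 : kp_s F l = 0.
    by rewrite -(KPps HF l) hl; case: (hperp _ Js).
  case: (pselect (nonzero_deg (deg l))) => [nz|z].
    apply: (p_nz HKP LC (u := src l)).
    by have := KP3 HF nz (in_le_self l) (in_le_self l); rewrite eqxx s0 mula0 => <-.
  have d0 : forall i, deg l i = 0%N.
    by move=> i; case: (deg l i =P 0%N) => // h; exfalso; apply: z; exists i.
  have ev : src l = v by rewrite (deg0_rs d0).
  apply: (p_nz HKP LC (u := v)).
  rewrite -{1}(KPpp HF v); case: (hperp (kp_p F v)) => //.
  by apply/HJ; rewrite -ev.
move=> hv x hx.
pose pv := kp_p F v.
pose I := fun x : A => (nua_mul pv x = 0 /\ nua_mul x pv = 0) /\
  forall a, nua_mul pv (nua_mul a x) = 0 /\ nua_mul (nua_mul x a) pv = 0.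
suff : I x by case.
apply: (hx I).
  split.
  - rewrite /I; split; first by split; [exact: mula0|exact: mul0a].
    by move=> a; split; [rewrite mula0; exact: mula0|rewrite mul0a; exact: mul0a].
  - move=> a b [[h1 h2] h3] [[h4 h5] h6]; split.
      by rewrite nua_mulDr nua_mulDl h1 h2 h4 h5 addr0.
    move=> c; have [h7 h8] := h3 c; have [h9 h10] := h6 c.
    by rewrite nua_mulDr nua_mulDr nua_mulDl nua_mulDl h7 h8 h9 h10 addr0.
  - move=> r a [[h1 h2] h3]; split.
      by rewrite nua_scalerAr nua_scalerAl h1 h2 scaler0.
    move=> c; have [h7 h8] := h3 c.
    by rewrite nua_scalerAr nua_scalerAr nua_scalerAl nua_scalerAl h7 h8 scaler0.
  - move=> a y [[h1 h2] h3]; split.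
    + split.
        split; first by case: (h3 a).
        by rewrite -nua_mulA h2 mula0.
      move=> b; split.
        by rewrite [nua_mul b _]nua_mulA; case: (h3 (nua_mul b a)).
      rewrite -[nua_mul (nua_mul a y) b]nua_mulA -nua_mulA.
      by case: (h3 b) => _ ->; rewrite mula0.
    + split.
        split; first by rewrite nua_mulA h1 mul0a.
        by case: (h3 a).
      move=> b; split.
        rewrite [nua_mul b _]nua_mulA nua_mulA.
        by case: (h3 b) => -> _; rewrite mul0a.
      by rewrite -[nua_mul (nua_mul y a) b]nua_mulA; case: (h3 (nua_mul a b)).
move=> y [w [hw ->]].
have vw : v != w.
  by apply/eqP => e; apply: hv; exists (idp v); rewrite rng_idp src_idp e.
have hvan := vanish HKP RF LC hH hv hw.
split.
  split; first by apply: (KPpq HF).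
  by apply: (KPpq HF); rewrite eq_sym.
move=> a; split.
  by rewrite nua_mulA; case: (hvan a).
by case: (hvan a).
Qed.
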